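(* Let $d\ge2$ and $\mathcal A=\{e_1,\dots,e_d\}\subset\mathbb R^d$ be the standard basis (vertices of the probability simplex). Then $\mathrm{PWidth}(\mathcal A)$ equals the width of the simplex $\mathrm{conv}(\mathcal A)$ (the minimum over unit directions $u$ in the linear span of $\mathrm{conv}(\mathcal A)-\mathrm{conv}(\mathcal A)$ of $\max_{s,v\in\mathcal A}\langle u,s-v\rangle$), namely $2/\sqrt d$ if $d$ is even and $2/\sqrt{d-1/d}$ if $d$ is odd.
   Context: Euclidean norm and inner product. For a finite set $\mathcal B\subseteq\mathbb R^d$ and $x\in\mathrm{conv}(\mathcal B)$, $\mathcal S_x(\mathcal B)$ is the family of subsets $S\subseteq\mathcal B$ such that $x$ is a proper convex combination of all elements of $S$ (all coefficients positive). For $r\ne0$, $\mathrm{PdirW}(\mathcal B,r,x):=\min_{S\in\mathcal S_x(\mathcal B)}\max_{s\in\mathcal B,\,v\in S}\langle r/\|r\|,s-v\rangle$. The pyramidal width is $\mathrm{PWidth}(\mathcal A):=\inf\{\mathrm{PdirW}(\mathcal K\cap\mathcal A,r,x)\}$ over all nonempty faces $\mathcal K$ of $\mathrm{conv}(\mathcal A)$ (including $\mathrm{conv}(\mathcal A)$ itself), all $x\in\mathcal K$, and all $r\in\mathrm{cone}(\mathcal K-x)\setminus\{0\}$, where $\mathrm{cone}(\mathcal K-x)=\{\sum_i\lambda_i(y_i-x):\lambda_i\ge0,\ y_i\in\mathcal K\}$. *)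

(* Defs.v *)
From HB Require Import structures.
From mathcomp Require Import all_boot all_order all_algebra.
Set Implicit Arguments. Unset Strict Implicit. Unset Printing Implicit Defensive.
Import Order.TTheory GRing.Theory Num.Theory.
Local Open Scope ring_scope.

Section PW.
Variables (R : rcfType) (d : nat).
Local Notation vec := 'rV[R]_d.

Definition dot (u v : vec) : R := \sum_(i < d) u 0 i * v 0 i.
Definition enorm (u : vec) : R := Num.sqrt (dot u u).

Definition is_min (P : R -> Prop) (m : R) := P m /\ forall y, P y -> m <= y.
Definition is_max (P : R -> Prop) (m : R) := P m /\ forall y, P y -> y <= m.
Definition is_inf (P : R -> Prop) (m : R) :=
  (forall y, P y -> m <= y) /\ (forall b, (forall y, P y -> b <= y) -> b <= m).

(* Finite point sets are given as the image of an index set T : {set I} under an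
   (injective, in our application) family f : I -> vec. *)
Definition in_conv (I : finType) (f : I -> vec) (T : {set I}) (x : vec) :=
  exists l : I -> R, (forall i, i \in T -> 0 <= l i) /\
    \sum_(i in T) l i = 1 /\ x = \sum_(i in T) l i *: f i.

Definition proper_comb (I : finType) (f : I -> vec) (S : {set I}) (x : vec) :=
  exists l : I -> R, (forall i, i \in S -> 0 < l i) /\
    \sum_(i in S) l i = 1 /\ x = \sum_(i in S) l i *: f i.

Definition in_Sx (I : finType) (f : I -> vec) (T : {set I}) (x : vec) (S : {set I}) :=
  S \subset T /\ proper_comb f S x.

Definition dirmax (I : finType) (f : I -> vec) (T S : {set I}) (r : vec) (w : R) :=
  is_max (fun y => exists i j, i \in T /\ j \in S /\
                     y = dot ((enorm r)^-1 *: r) (f i - f j)) w.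

Definition PdirW (I : finType) (f : I -> vec) (T : {set I}) (r x : vec) (w : R) :=
  is_min (fun y => exists S, in_Sx f T x S /\ dirmax f T S r y) w.

Definition convA (I : finType) (f : I -> vec) (x : vec) := in_conv f [set: I] x.

Definition is_face (I : finType) (f : I -> vec) (K : vec -> Prop) :=
  (exists x, K x) /\
  (forall x, K x -> convA f x) /\
  (forall y z (t : R), K y -> K z -> 0 <= t <= 1 -> K ((1 - t) *: y + t *: z)) /\
  (forall y z (t : R), convA f y -> convA f z -> 0 < t < 1 ->
      K ((1 - t) *: y + t *: z) -> K y /\ K z).

Definition in_cone (K : vec -> Prop) (x r : vec) :=
  exists (n : nat) (lam : 'I_n -> R) (ys : 'I_n -> vec),
    (forall k, 0 <= lam k) /\ (forall k, K (ys k)) /\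
    r = \sum_(k < n) lam k *: (ys k - x).

Definition PWidth_vals (I : finType) (f : I -> vec) (w : R) :=
  exists (K : vec -> Prop) (T : {set I}) (x r : vec),
    is_face f K /\ (forall i, i \in T <-> K (f i)) /\ K x /\
    in_cone K x r /\ r != 0 /\ PdirW f T r x w.

Definition PWidth (I : finType) (f : I -> vec) (w : R) := is_inf (PWidth_vals f) w.

Definition in_diffspan (I : finType) (f : I -> vec) (u : vec) :=
  exists (n : nat) (c : 'I_n -> R) (p q : 'I_n -> vec),
    (forall k, convA f (p k)) /\ (forall k, convA f (q k)) /\
    u = \sum_(k < n) c k *: (p k - q k).

Definition width (I : finType) (f : I -> vec) (w : R) :=
  is_min (fun y => exists u, in_diffspan f u /\ enorm u = 1 /\
     is_max (fun z => exists i j, z = dot u (f i - f j)) y) w.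

End PW.

Definition std_basis (R : rcfType) (d : nat) (i : 'I_d) : 'rV[R]_d := delta_mx 0 i.

(* Main.v *)
Require Import Defs.
From HB Require Import structures.
From mathcomp Require Import all_boot all_order all_algebra.
From mathcomp Require Import ring lra zify.
Set Implicit Arguments. Unset Strict Implicit. Unset Printing Implicit Defensive.
Import Order.TTheory GRing.Theory Num.Theory.
Local Open Scope ring_scope.

Lemma natl (a d : nat) : (a <= d)%N -> (a * (d - a) <= d./2 * (d - d./2))%N.
Proof.
move=> ad. have E := odd_double_half d. move: E ad.
move: (d./2) => h. case: (odd d) => /= <- ad; rewrite -addnn.
  case: (leqP a h) => ah.
    have [k ->] : exists k, h = (a + k)%N by exists (h - a)%N; lia.
    nia.
  have [k ->] : exists k, a = (h + 1 + k)%N by exists (a - h - 1)%N; lia.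
  nia.
case: (leqP a h) => ah.
  have [k ->] : exists k, h = (a + k)%N by exists (h - a)%N; lia.
  nia.
have [k ->] : exists k, a = (h + 1 + k)%N by exists (a - h - 1)%N; lia.
nia.
Qed.

Section H.
Variables (R : rcfType) (d : nat).
Local Notation vec := 'rV[R]_d.
Local Notation e := (@std_basis R d).

Lemma e_coord i j : e i 0 j = (j == i)%:R.
Proof. by rewrite /std_basis mxE eqxx. Qed.

Lemma comb_coord (T : {set 'I_d}) (l : 'I_d -> R) j :
  (\sum_(i in T) l i *: e i) 0 j = if j \in T then l j else 0.
Proof.
rewrite summxE; under eq_bigr do rewrite mxE e_coord.
case: (boolP (j \in T)) => jT.
  rewrite (bigD1 j) //= eqxx mulr1 big1 ?addr0 // => i /andP[_ ni].
  by rewrite eq_sym (negbTE ni) mulr0.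
rewrite big1 // => i iT.
have ->: (j == i) = false by apply/negbTE; apply: contraNneq jT => ->.
by rewrite mulr0.
Qed.

Lemma convA_coord (y : vec) :
  convA e y <-> ((forall j, 0 <= y 0 j) /\ \sum_j y 0 j = 1).
Proof.
split.
  case=> l [l0 [l1 ->]]; split.
    by move=> j; rewrite comb_coord in_setT l0 ?in_setT.
  under eq_bigr do rewrite comb_coord in_setT.
  by rewrite -l1; apply: eq_bigl => i; rewrite in_setT.
case=> y0 y1; exists (fun j => y 0 j); split; first by [].
split; first by rewrite -y1; apply: eq_bigl => i; rewrite in_setT.
apply/rowP => j; rewrite comb_coord in_setT; by [].
Qed.

Lemma dot_e (u : vec) i : dot u (e i) = u 0 i.
Proof.
rewrite /dot (bigD1 i) //= e_coord eqxx mulr1 big1 ?addr0 // => k ki.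
by rewrite e_coord (negbTE ki) mulr0.
Qed.

Lemma dotB (u v w : vec) : dot u (v - w) = dot u v - dot u w.
Proof. by rewrite /dot -sumrB; apply: eq_bigr => i _; rewrite !mxE mulrBr. Qed.

Lemma dotZl a (u v : vec) : dot (a *: u) v = a * dot u v.
Proof. by rewrite /dot mulr_sumr; apply: eq_bigr => i _; rewrite mxE mulrA. Qed.

Lemma dot_eB (u : vec) i j : dot u (e i - e j) = u 0 i - u 0 j.
Proof. by rewrite dotB !dot_e. Qed.

Definition sumv (v : vec) := \sum_k v 0 k.

Lemma sumvD (u v : vec) : sumv (u + v) = sumv u + sumv v.
Proof. by rewrite /sumv -big_split; apply: eq_bigr => k _; rewrite mxE. Qed.
Lemma sumvN (u : vec) : sumv (- u) = - sumv u.
Proof. by rewrite /sumv -sumrN; apply: eq_bigr => k _; rewrite mxE. Qed.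
Lemma sumvB (u v : vec) : sumv (u - v) = sumv u - sumv v.
Proof. by rewrite sumvD sumvN. Qed.
Lemma sumvZ a (u : vec) : sumv (a *: u) = a * sumv u.
Proof. by rewrite /sumv mulr_sumr; apply: eq_bigr => k _; rewrite mxE. Qed.
Lemma sumv_sum n (F : 'I_n -> vec) : sumv (\sum_(k < n) F k) = \sum_(k < n) sumv (F k).
Proof.
rewrite /sumv; under eq_bigr do rewrite summxE.
by rewrite exchange_big.
Qed.
Lemma sumv_e i : sumv (e i) = 1.
Proof.
rewrite /sumv (bigD1 i) //= e_coord eqxx big1 ?addr0 // => k ki.
by rewrite e_coord (negbTE ki).
Qed.

Lemma ex_max (F : 'I_d -> R) (i0 : 'I_d) : exists i, forall k, F k <= F i.
Proof. by case: (@arg_maxP _ R _ i0 xpredT F erefl) => i _ H; exists i => k; exact: H. Qed.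
Lemma ex_min (F : 'I_d -> R) (i0 : 'I_d) : exists i, forall k, F i <= F k.
Proof. by case: (@arg_minP _ R _ i0 xpredT F erefl) => i _ H; exists i => k; exact: H. Qed.

Lemma face_support (K : vec -> Prop) y j :
  is_face e K -> K y -> y 0 j != 0 -> K (e j).
Proof.
move=> [_ [KA [_ Kext]]] Ky yj.
have /convA_coord [y0 y1] := KA _ Ky.
have y1' : y 0 j <= 1.
  rewrite -y1 (bigD1 j) //= lerDl; exact: sumr_ge0.
have ylt : 0 < y 0 j by rewrite lt0r yj y0.
case: (eqVneq (y 0 j) 1) => yj1.
  suff -> : e j = y by [].
  have rest : \sum_(k < d | k != j) y 0 k = 0.
    by move: y1; rewrite (bigD1 j) //= yj1 => /(congr1 (fun x => x - 1)); rewrite addrC addrK subrr.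
  apply/rowP => k; rewrite e_coord.
  case: (eqVneq k j) => [->|kj]; first by rewrite yj1.
  have /psumr_eq0P H := rest.
  by rewrite H //; move=> i _; exact: y0.
have ylt1 : y 0 j < 1 by rewrite lt_neqAle yj1 y1'.
set t := 1 - y 0 j.
have tpos : 0 < t by rewrite subr_gt0.
set z := t^-1 *: (y - y 0 j *: e j).
have Az : convA e z.
  apply/convA_coord; split.
    move=> k; rewrite !mxE eqxx /=; apply: mulr_ge0; first by rewrite invr_ge0 ltW.
    case: (eqVneq k j) => [->|kj]; first by rewrite mulr1 subrr.
    by rewrite mulr0 subr0.
  have := sumvZ t^-1 (y - y 0 j *: e j).
  by rewrite /sumv => ->; rewrite -/(sumv _) sumvB sumvZ sumv_e mulr1 /sumv y1 mulVf // gt_eqF.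
have Aej : convA e (e j).
  apply/convA_coord; split; last by apply: sumv_e.
  by move=> k; rewrite e_coord ler0n.
have ht : 0 < t < 1 by rewrite tpos /t ltrBlDr ltrDl ylt.
have eq : (1 - t) *: e j + t *: z = y.
  have -> : 1 - t = y 0 j by rewrite /t opprB addrC subrK.
  by rewrite /z scalerA mulfV ?gt_eqF // scale1r addrC subrK.
have := Kext _ _ _ Aej Az ht; rewrite eq => H; exact: (H Ky).1.
Qed.

Lemma sum_coord n (lam : 'I_n -> R) (ys : 'I_n -> vec) x j :
  (\sum_(k < n) lam k *: (ys k - x)) 0 j = \sum_(k < n) lam k * (ys k 0 j - x 0 j).
Proof. by rewrite summxE; apply: eq_bigr => k _; rewrite !mxE. Qed.

Lemma cone_props (K : vec -> Prop) x r : is_face e K -> K x -> in_cone K x r ->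
  [/\ sumv r = 0, forall j, x 0 j = 0 -> 0 <= r 0 j & forall j, ~ K (e j) -> r 0 j = 0].
Proof.
move=> F Kx [n [lam [ys [l0 [Ky ->]]]]].
have KA := (F.2.1).
have zero y j : K y -> ~ K (e j) -> y 0 j = 0.
  move=> Ky' nK; case: (eqVneq (y 0 j) 0) => // yj.
  by exfalso; exact: nK (face_support F Ky' yj).
split.
- rewrite sumv_sum big1 // => k _.
  rewrite sumvZ sumvB.
  have /convA_coord [_ s1] := KA _ (Ky k).
  have /convA_coord [_ s2] := KA _ Kx.
  by rewrite /sumv s1 s2 subrr mulr0.
- move=> j xj; rewrite sum_coord; apply: sumr_ge0 => k _.
  have /convA_coord [y0 _] := KA _ (Ky k).
  by rewrite xj subr0 mulr_ge0.
- move=> j nK; rewrite sum_coord big1 // => k _.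
  by rewrite (zero _ _ (Ky k) nK) (zero _ _ Kx nK) subrr mulr0.
Qed.

Lemma key (u : vec) i j : sumv u = 0 -> (forall k, u 0 k <= u 0 i) ->
  (forall k, u 0 j <= u 0 k) ->
  d%:R * dot u u <= (u 0 i - u 0 j)^+2 * (d./2 * (d - d./2))%:R.
Proof.
move=> s0 hM hm.
set M := u 0 i; set m := u 0 j.
pose A := [set k | 0 < u 0 k].
pose P := \sum_(k in A) u 0 k.
pose Q := \sum_(k in ~: A) u 0 k.
have split F : \sum_k F k = \sum_(k in A) F k + \sum_(k in ~: A) F k :> R.
  rewrite (bigID (mem A)) /=; congr (_ + _).
  by apply: eq_bigl => k; rewrite in_setC.
have hPQ : P + Q = 0 by rewrite -split.
have hN : dot u u <= M * P + m * Q.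
  rewrite /dot split; apply: lerD.
    rewrite /P mulr_sumr; apply: ler_sum => k; rewrite inE => uk.
    by apply: ler_wpM2r; [exact: ltW | exact: hM].
  rewrite /Q mulr_sumr; apply: ler_sum => k; rewrite !inE -leNgt => uk.
  by apply: ler_wnM2r => //; exact: hm.
have hP : P <= M *+ #|A|.
  rewrite -sumr_const; apply: ler_sum => k _; exact: hM.
have hQ : m *+ #|~: A| <= Q.
  rewrite -sumr_const; apply: ler_sum => k _; exact: hm.
have hP0 : 0 <= P by apply: sumr_ge0 => k; rewrite inE => /ltW.
have hmM : m <= M by exact: (hm i).
have hc : (#|A| + #|~: A|)%N = d by rewrite cardsC card_ord.
have hnat := natl (leq_addr #|~: A| #|A|).
rewrite hc in hnat.
have hb : (d - #|A|)%N = #|~: A| by lia.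
rewrite hb in hnat.
have hnatR : (#|A|%:R * #|~: A|%:R <= (d./2 * (d - d./2))%:R :> R).
  by rewrite -natrM ler_nat.
have hdR : d%:R = #|A|%:R + #|~: A|%:R :> R by rewrite -natrD hc.
rewrite hdR.
move: hP hQ; rewrite -[M *+ _]mulr_natr -[m *+ _]mulr_natr => hP hQ.
set a := #|A|%:R in hP hnatR *; set b := #|~: A|%:R in hQ hnatR *.
set H := (d./2 * (d - d./2))%:R in hnatR *.
have a0 : 0 <= a by rewrite ler0n.
have b0 : 0 <= b by rewrite ler0n.
have hQ' : Q = - P by apply/eqP; rewrite -addr_eq0 addrC hPQ.
rewrite hQ' in hN hQ.
set D := M - m.
have D0 : 0 <= D by rewrite subr_ge0.
have h1 : dot u u <= D * P by rewrite /D mulrBl; lra.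
have h2 : (a + b) * P <= D * (a * b).
  have e1 : b * P <= b * (M * a) by apply: ler_wpM2l.
  have e2 : a * P <= a * (- (m * b)) by apply: ler_wpM2l => //; rewrite lerNr.
  have -> : D * (a * b) = b * (M * a) + a * (- (m * b)) by rewrite /D /M /m; ring.
  by rewrite mulrDl addrC; exact: lerD e1 e2.
have h3 : (a + b) * dot u u <= (a + b) * (D * P).
  by apply: ler_wpM2l; [exact: addr_ge0 | exact: h1].
have h4 : (a + b) * (D * P) <= D * (D * (a * b)).
  by rewrite mulrCA; apply: ler_wpM2l; [exact: D0 | exact: h2].
have h5 : D * (D * (a * b)) <= D ^+ 2 * H.
  rewrite mulrA -expr2; apply: ler_wpM2l => //; exact: sqr_ge0.
by apply: (le_trans h3); apply: (le_trans h4).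
Qed.

Definition hh := d./2.
Definition HH : R := (hh * (d - hh))%:R.
Definition WW : R := d%:R / HH.

Lemma HH_gt0 : (2 <= d)%N -> 0 < HH.
Proof.
move=> hd; rewrite /HH ltr0n muln_gt0 /hh.
have := odd_double_half d; move: (d./2) => h; case: (odd d) => /= E; apply/andP; split; lia.
Qed.

Lemma WW_ge0 : (2 <= d)%N -> 0 <= WW.
Proof. by move=> hd; rewrite /WW divr_ge0 // ltW // HH_gt0. Qed.

Lemma wE : (2 <= d)%N ->
  (if odd d then 2 / Num.sqrt (d%:R - d%:R^-1) else 2 / Num.sqrt d%:R : R)
   = Num.sqrt WW.
Proof.
move=> hd.
have sq x : 0 <= x -> x = Num.sqrt (x ^+ 2) by move=> x0; rewrite sqrtr_sqr ger0_norm.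
rewrite /WW /HH /hh.
have := odd_double_half d; move: (d./2) => h.
case: (odd d) => /= E; rewrite -addnn in E.
  have h1 : (1 <= h)%N by lia.
  have Ed : d%:R = 2 * h%:R + 1 :> R.
    have -> : d = (h + h + 1)%N by lia.
    by rewrite !natrD; ring.
  have Edh : (d - h)%N = h.+1 by lia.
  have hR : 0 < h%:R :> R by rewrite ltr0n.
  have pos : 0 < d%:R - d%:R^-1 :> R.
    have g1 : 1 < 2 * h%:R + 1 :> R by lra.
    rewrite Ed subr_gt0; apply: (lt_trans _ g1).
    rewrite invf_lt1; lra.
  rewrite [LHS]sq; last by rewrite divr_ge0 // sqrtr_ge0.
  rewrite expr_div_n sqr_sqrtr ?ltW //; congr Num.sqrt.
  have hS : h.+1%:R = h%:R + 1 :> R by rewrite -addn1 natrD.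
  rewrite Edh natrM hS Ed.
  field. by apply/and4P; split; apply: lt0r_neq0; nra.
have Ed : d%:R = 2 * h%:R :> R.
  have -> : d = (h + h)%N by lia.
  by rewrite !natrD; ring.
have Edh : (d - h)%N = h by lia.
have h1 : (1 <= h)%N by lia.
have hR : 0 < h%:R :> R by rewrite ltr0n.
rewrite [LHS]sq; last by rewrite divr_ge0 // sqrtr_ge0.
rewrite expr_div_n sqr_sqrtr ?ler0n //; congr Num.sqrt.
rewrite Edh natrM Ed.
field. by rewrite lt0r_neq0.
Qed.

Lemma dot_ge0 (u : vec) : 0 <= dot u u.
Proof. by apply: sumr_ge0 => k _; rewrite -expr2 sqr_ge0. Qed.

Lemma lbW (u : vec) i j : (2 <= d)%N -> sumv u = 0 -> (forall k, u 0 k <= u 0 i) ->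
  (forall k, u 0 j <= u 0 k) -> Num.sqrt WW * enorm u <= u 0 i - u 0 j.
Proof.
move=> hd s0 hM hm.
have D0 : 0 <= u 0 i - u 0 j by rewrite subr_ge0 hm.
rewrite /enorm -sqrtrM ?WW_ge0 //.
rewrite -[u 0 i - u 0 j]ger0_norm // -sqrtr_sqr ler_sqrt ?sqr_ge0 //.
have hk := key s0 hM hm.
by rewrite /WW mulrAC ler_pdivrMr ?HH_gt0.
Qed.

Lemma nz_pos (v : vec) : sumv v = 0 -> v != 0 -> exists k, 0 < v 0 k.
Proof.
move=> s0 nz; have [k hk|hn] := pickP (fun k => 0 < v 0 k); first by exists k.
exfalso; move/negP: nz; apply; apply/eqP/rowP => k; rewrite mxE.
have h0 : forall k, 0 <= - v 0 k by move=> k'; rewrite oppr_ge0 leNgt hn.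
have hs : \sum_k - v 0 k = 0 by rewrite sumrN -/(sumv v) s0 oppr0.
have := psumr_eq0P (fun k _ => h0 k) hs (i := k) isT.
by move/eqP; rewrite oppr_eq0 => /eqP.
Qed.

Lemma nz_neg (v : vec) : sumv v = 0 -> v != 0 -> exists k, v 0 k < 0.
Proof.
move=> s0 nz; have [k hk] : exists k, 0 < (- v) 0 k.
  by apply: nz_pos; [rewrite sumvN s0 oppr0 | rewrite oppr_eq0].
by exists k; move: hk; rewrite mxE oppr_gt0.
Qed.

Lemma pw_lb (K : vec -> Prop) (T : {set 'I_d}) x r (S : {set 'I_d}) (y : R) : (2 <= d)%N ->
  is_face e K -> (forall i, i \in T <-> K (e i)) -> K x -> in_cone K x r ->
  r != 0 -> in_Sx e T x S -> dirmax e T S r y -> Num.sqrt WW <= y.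
Proof.
move=> hd F hT Kx cone nz [sST [l [l0 [l1 xE]]]] [_ ymax].
have [s0 xpos rT] := cone_props F Kx cone.
have i0 : 'I_d by exists 0%N; lia.
have [i hi] := ex_max (fun k => r 0 k) i0.
have [j hj] := ex_min (fun k => r 0 k) i0.
have ri : 0 < r 0 i by have [k hk] := nz_pos s0 nz; exact: lt_le_trans hk (hi k).
have rj : r 0 j < 0 by have [k hk] := nz_neg s0 nz; exact: le_lt_trans (hj k) hk.
have iT : i \in T.
  case: (boolP (i \in T)) => // iN; exfalso.
  have nK : ~ K (e i) by move=> /hT; apply/negP.
  by move: ri; rewrite (rT _ nK) ltxx.
have jS : j \in S.
  case: (boolP (j \in S)) => // jN; exfalso.
  have : x 0 j = 0 by rewrite xE comb_coord (negbTE jN).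
  by move=> /xpos; rewrite leNgt rj.
have := ymax _ (ex_intro _ i (ex_intro _ j (conj iT (conj jS erefl)))).
rewrite dotZl dot_eB.
have Npos : 0 < enorm r.
  rewrite /enorm sqrtr_gt0 /dot (bigD1 i) //=.
  apply: (@lt_le_trans _ _ (r 0 i * r 0 i)); first by rewrite mulr_gt0.
  by rewrite lerDl; apply: sumr_ge0 => k _; rewrite -expr2 sqr_ge0.
apply: le_trans; rewrite mulrC ler_pdivlMr //.
exact: lbW.
Qed.
End H.

Section H2.
Variables (R : rcfType) (d : nat).
Local Notation vec := 'rV[R]_d.
Local Notation e := (@std_basis R d).
Local Notation hh := (hh d).
Local Notation HH := (@HH R d).
Local Notation WW := (@WW R d).

Lemma sum_split (al be : R) : (hh <= d)%N ->
  \sum_(k < d) (if (k < hh)%N then al else be) = hh%:R * al + (d - hh)%:R * be.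
Proof.
move=> hd.
rewrite -(big_mkord xpredT (fun k => if (k < hh)%N then al else be)).
rewrite (@big_cat_nat _ _ _ hh 0 d _ _ (leq0n hh) hd) /=.
rewrite (@eq_big_nat _ _ _ 0 hh _ (fun _ => al)); last by move=> k /andP[_ ->].
rewrite (@eq_big_nat _ _ _ hh d _ (fun _ => be)); last first.
  by move=> k /andP[hk _]; rewrite ltnNge hk.
by rewrite !sumr_const_nat subn0 !mulr_natl.
Qed.

Definition c0 : R := (Num.sqrt (HH * d%:R))^-1.
Definition al0 : R := (d - hh)%:R * c0.
Definition be0 : R := - (hh%:R * c0).
Definition u0 : vec := \row_(k < d) (if (k < hh)%N then al0 else be0).
Definition bc : vec := \row_(k < d) d%:R^-1.

Lemma comb_eb (lam : 'I_d -> R) :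
  \sum_(k < d) lam k *: (e k - bc) = \row_j (lam j - d%:R^-1 * \sum_k lam k).
Proof.
apply/rowP => j; rewrite sum_coord [RHS]mxE.
under eq_bigr do rewrite e_coord /bc mxE mulrBr.
rewrite sumrB mulrC mulr_suml; congr (_ - _).
rewrite (bigD1 j) //= eqxx mulr1 big1 ?addr0 // => k kj.
by rewrite eq_sym (negbTE kj) mulr0.
Qed.

Section WithHd.
Variable hd : (2 <= d)%N.

Lemma hh_pos : (0 < hh)%N.
Proof. rewrite /hh; have := odd_double_half d; move: (d./2) => h; case: (odd d) => /= E; rewrite -addnn in E; lia. Qed.
Lemma hh_lt : (hh < d)%N.
Proof. rewrite /hh; have := odd_double_half d; move: (d./2) => h; case: (odd d) => /= E; rewrite -addnn in E; lia. Qed.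

Lemma dR_pos : 0 < d%:R :> R.
Proof. by rewrite ltr0n; lia. Qed.

Lemma X_pos : 0 < HH * d%:R.
Proof. by rewrite mulr_gt0 // ?HH_gt0 // dR_pos. Qed.

Lemma c0_pos : 0 < c0.
Proof. by rewrite /c0 invr_gt0 sqrtr_gt0 X_pos. Qed.

Lemma c0_sq : c0 ^+ 2 * (HH * d%:R) = 1.
Proof. by rewrite /c0 exprVn sqr_sqrtr ?ltW ?X_pos // mulVf // gt_eqF // X_pos. Qed.

Lemma dhh : (d - hh)%:R + hh%:R = d%:R :> R.
Proof. by rewrite -natrD subnK // ltnW // hh_lt. Qed.

Lemma al0_pos : 0 < al0.
Proof. by rewrite /al0 mulr_gt0 ?c0_pos // ltr0n subn_gt0 hh_lt. Qed.
Lemma be0_neg : be0 < 0.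
Proof. by rewrite /be0 oppr_lt0 mulr_gt0 ?c0_pos // ltr0n hh_pos. Qed.

Lemma sum_u0 : sumv u0 = 0.
Proof.
rewrite /sumv; under eq_bigr do rewrite mxE.
rewrite sum_split; last exact: ltnW hh_lt.
rewrite /al0 /be0; move: (hh%:R) ((d - hh)%:R) c0 => a b c; ring.
Qed.

Lemma u0_coord k : u0 0 k = if (k < hh)%N then al0 else be0.
Proof. by rewrite mxE. Qed.

Lemma dot_u0 : dot u0 u0 = 1.
Proof.
rewrite /dot.
have E k : u0 0 k * u0 0 k = if (k < hh)%N then al0 * al0 else be0 * be0.
  by rewrite u0_coord; case: ifP.
under eq_bigr do rewrite E.
rewrite sum_split; last exact: ltnW hh_lt.
rewrite -[RHS]c0_sq /HH natrM -dhh /al0 /be0.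
move: (hh%:R) ((d - hh)%:R) c0 => a b c; ring.
Qed.

Lemma enorm_u0 : enorm u0 = 1.
Proof. by rewrite /enorm dot_u0 sqrtr1. Qed.

Lemma u0_ne0 : u0 != 0.
Proof.
apply/negP => /eqP/rowP/(_ (Ordinal hh_lt)); rewrite !mxE.
have -> : (hh < hh)%N = false by rewrite ltnn.
by move/eqP; rewrite lt_eqF // be0_neg.
Qed.

Lemma u0_bound k l : u0 0 k - u0 0 l <= al0 - be0.
Proof.
have ab := lt_trans be0_neg al0_pos.
have h1 : u0 0 k <= al0 by rewrite u0_coord; case: ifP => // _; exact: ltW ab.
have h2 : be0 <= u0 0 l by rewrite u0_coord; case: ifP => // _; exact: ltW ab.
exact: lerB.
Qed.

Lemma ab_eq : al0 - be0 = Num.sqrt WW.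
Proof.
have h : 0 <= al0 - be0 by rewrite subr_ge0 ltW // (lt_trans be0_neg al0_pos).
rewrite -[LHS]ger0_norm // -sqrtr_sqr; congr Num.sqrt.
have -> : al0 - be0 = d%:R * c0 by rewrite /al0 /be0 opprK -mulrDl dhh.
rewrite exprMn /c0 exprVn sqr_sqrtr ?ltW ?X_pos // /WW.
have hp := @HH_gt0 R d hd; have dp := dR_pos.
move: HH (d%:R) hp dp => x y xp yp.
by field; rewrite ?lt0r_neq0.
Qed.


Lemma convA_e i : convA e (e i).
Proof. by apply/convA_coord; split; [move=> k; rewrite e_coord ler0n | exact: sumv_e]. Qed.

Lemma sumr_inv : \sum_(k < d) d%:R^-1 = 1 :> R.
Proof. by rewrite sumr_const card_ord -(mulr_natr (d%:R^-1)) mulVf // gt_eqF // dR_pos. Qed.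

Lemma convA_bc : convA e bc.
Proof.
apply/convA_coord; split; first by move=> k; rewrite mxE invr_ge0 ltW // dR_pos.
by under eq_bigr do rewrite mxE; exact: sumr_inv.
Qed.

Lemma face_convA : is_face e (convA e).
Proof.
split; first by exists bc; exact: convA_bc.
split; first by [].
split; last by [].
move=> y z t /convA_coord [y0 y1] /convA_coord [z0 z1] /andP [t0 t1].
apply/convA_coord; split.
  move=> k; rewrite !mxE; apply: addr_ge0; apply: mulr_ge0 => //.
  by rewrite subr_ge0.
change (sumv ((1 - t) *: y + t *: z) = 1).
by rewrite sumvD !sumvZ /sumv y1 z1 !mulr1 subrK.
Qed.

Lemma cone_u0 : in_cone (convA e) bc u0.
Proof.
exists d, (fun k => u0 0 k + hh%:R * c0), (fun k => e k).
split.
  move=> k; rewrite u0_coord; case: ifP => _.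
    by rewrite addr_ge0 // ltW // ?al0_pos // mulr_gt0 ?c0_pos // ltr0n hh_pos.
  by rewrite /be0 addNr.
split; first by move=> k; exact: convA_e.
rewrite comb_eb; apply/rowP => j; rewrite [RHS]mxE big_split /=.
have := sum_u0; rewrite /sumv => ->.
rewrite sumr_const card_ord add0r -(mulr_natl (hh%:R * c0)) mulKf ?gt_eqF ?dR_pos //.
by rewrite addrK.
Qed.

Lemma diffspan_u0 : in_diffspan e u0.
Proof.
exists d, (fun k => u0 0 k), (fun k => e k), (fun _ => bc).
split; first by move=> k; exact: convA_e.
split; first by move=> _; exact: convA_bc.
rewrite comb_eb; apply/rowP => j; rewrite [RHS]mxE.
by have := sum_u0; rewrite /sumv => ->; rewrite mulr0 subr0.
Qed.

Lemma insx_bc : in_Sx e setT bc setT.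
Proof.
split; first exact: subxx.
exists (fun _ => d%:R^-1); split; first by move=> _ _; rewrite invr_gt0 dR_pos.
split.
  by rewrite sumr_const cardsT card_ord -(mulr_natr (d%:R^-1)) mulVf // gt_eqF // dR_pos.
by apply/rowP => j; rewrite comb_coord in_setT mxE.
Qed.

Lemma dhh1 : (d.-1 < d)%N.
Proof. by rewrite prednK //; lia. Qed.

Lemma u0_attain : al0 - be0 = u0 0 (Ordinal (ltn_trans hh_pos hh_lt)) - u0 0 (Ordinal dhh1).
Proof.
rewrite !u0_coord /= hh_pos.
have -> : (d.-1 < hh)%N = false.
  by apply/negbTE; rewrite -leqNgt; have := hh_lt; lia.
by [].
Qed.

Lemma dirmax_u0 : dirmax e setT setT u0 (Num.sqrt WW).
Proof.
split.
  exists (Ordinal (ltn_trans hh_pos hh_lt)), (Ordinal dhh1).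
  rewrite !in_setT; split => //; split => //.
  by rewrite enorm_u0 invr1 scale1r dot_eB -u0_attain ab_eq.
move=> y [i [j [_ [_ ->]]]].
by rewrite enorm_u0 invr1 scale1r dot_eB -ab_eq; exact: u0_bound.
Qed.

Lemma diffspan_sum u : in_diffspan e u -> sumv u = 0.
Proof.
move=> [n [c [p [q [hp [hq ->]]]]]].
rewrite sumv_sum big1 // => k _.
have /convA_coord [_ s1] := hp k; have /convA_coord [_ s2] := hq k.
by rewrite sumvZ sumvB /sumv s1 s2 subrr mulr0.
Qed.

Lemma main_aux : PWidth e (Num.sqrt WW) /\ width e (Num.sqrt WW).
Proof.
have i0 : 'I_d by exists 0%N; lia.
split.
  split.
    move=> y [K [T [x [r [F [hT [Kx [cone [nz pd]]]]]]]]].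
    have [[S [hS hy]] _] := pd.
    exact: pw_lb hd F hT Kx cone nz hS hy.
  move=> b hb; apply: hb.
  exists (convA e), setT, bc, u0.
  split; first exact: face_convA.
  split; first by move=> i; split => _; [exact: convA_e | rewrite in_setT].
  split; first exact: convA_bc.
  split; first exact: cone_u0.
  split; first exact: u0_ne0.
  split; first by exists setT; split; [exact: insx_bc | exact: dirmax_u0].
  move=> y [S [hS hy]].
  apply: (pw_lb hd face_convA _ convA_bc cone_u0 u0_ne0 hS hy).
  by move=> i; split => _; [exact: convA_e | rewrite in_setT].
split.
  exists u0; split; first exact: diffspan_u0.
  split; first exact: enorm_u0.
  split.
    exists (Ordinal (ltn_trans hh_pos hh_lt)), (Ordinal dhh1).
    by rewrite dot_eB -u0_attain ab_eq.
  move=> z [i [j ->]]; rewrite dot_eB -ab_eq; exact: u0_bound.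
move=> y [u [ds [nu [[ix [jx yE]] ymax]]]].
have s0 := diffspan_sum ds.
have [i hi] := ex_max (fun k => u 0 k) i0.
have [j hj] := ex_min (fun k => u 0 k) i0.
have := ymax _ (ex_intro _ i (ex_intro _ j erefl)).
rewrite dot_eB; apply: le_trans.
have := lbW hd s0 hi hj; by rewrite nu mulr1.
Qed.
End WithHd.
End H2.

Unset Implicit Arguments.
Theorem mainTheorem6 (R : rcfType) (d : nat) (hd : (2 <= d)%N) :
  let w : R := if odd d then 2 / Num.sqrt (d%:R - d%:R^-1) else 2 / Num.sqrt d%:R in
  PWidth (@std_basis R d) w /\ width (@std_basis R d) w.
Proof.
move=> w; rewrite /w (@wE R d hd); exact: main_aux.
Qed.
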